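(* For $n\geq 2$ let $k_n$ be the number of ordered pairs of words $(w,z)$ over the alphabet $\{A,B,C,D\}$ satisfying: (i) both $w$ and $z$ start with the letter $A$, and $|w|+|z|=n$; (ii) $w$ and $z$ contain the same number of letters $A$; (iii) neither $w$ nor $z$ contains a $CB$-factor (a letter $C$ immediately followed by a letter $B$); (iv) for all $i$, if the $i$th letter $A$ from the right in $w$ is immediately preceded by a $C$ and immediately followed by a $B$, then the $i$th segment of $z$ from the left contains a letter $B$; (v) for all $i$, if the $i$th letter $A$ from the right in $w$ is immediately preceded by a $C$ and immediately followed by two consecutive letters $B$, then the $i$th segment of $z$ from the left contains at least two letters $B$. Then there exists a constant $c$ such that $k_n\leq c\cdot 3.70672^n$ for all $n\geq 2$.
   Context: A segment of a word $v$ over $\{A,B,C,D\}$ is a factor (consecutive letters) that starts with a letter $A$ and ends immediately before the next letter $A$, or at the end of $v$. The $i$th segment from the left is the one starting at the $i$th letter $A$ from the left. The words $w$ and $z$ need not have the same length. *)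

(* Defs.v *)
From HB Require Import structures.
From mathcomp Require Import all_boot all_order all_algebra.
Set Implicit Arguments. Unset Strict Implicit. Unset Printing Implicit Defensive.

Inductive letter := A | B | C | D.

Definition letter_code (x : letter) : 'I_4 :=
  match x with A => inord 0 | B => inord 1 | C => inord 2 | D => inord 3 end.
Definition letter_decode (i : 'I_4) : letter :=
  match val i with 0 => A | 1 => B | 2 => C | _ => D end.
Lemma letter_codeK : cancel letter_code letter_decode.
Proof. by case; rewrite /letter_decode /= inordK. Qed.
HB.instance Definition _ := Equality.copy letter (can_type letter_codeK).
HB.instance Definition _ := Finite.copy letter (can_type letter_codeK).

Definition word := seq letter.

Definition posA (w : word) : seq nat := [seq p <- iota 0 (size w) | nth D w p == A].

(* position of the i-th (0-based) letter A from the right in w *)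
Definition posA_right (w : word) (i : nat) : nat := nth 0 (rev (posA w)) i.

(* the i-th (0-based) segment of z from the left: starts at the i-th A and
   ends right before the next A, or at the end of z *)
Definition segment (z : word) (i : nat) : word :=
  let s := nth 0 (posA z) i in
  let e := nth (size z) (posA z) i.+1 in
  drop s (take e z).

Definition no_CB (w : word) : bool :=
  ~~ [exists p : 'I_(size w), (nth D w p == C) && (nth D w p.+1 == B)].

Definition precC (w : word) (p : nat) : bool := (0 < p) && (nth D w p.-1 == C).

Definition good_pair (w z : word) : bool :=
  [&& head D w == A, head D z == A,
      count (pred1 A) w == count (pred1 A) z,
      no_CB w, no_CB z,
      [forall i : 'I_(count (pred1 A) w),
         let p := posA_right w i in
         (precC w p && (nth D w p.+1 == B)) ==> (0 < count (pred1 B) (segment z i))] &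
      [forall i : 'I_(count (pred1 A) w),
         let p := posA_right w i in
         (precC w p && (nth D w p.+1 == B) && (nth D w p.+2 == B))
           ==> (1 < count (pred1 B) (segment z i))]].

Definition k (n : nat) : nat :=
  \sum_(m < n.+1) #|[set p : m.-tuple letter * (n - m).-tuple letter
                     | good_pair (tval p.1) (tval p.2)]|.

(* Main.v *)
Require Import Defs.
From Stdlib Require Import NArith Lia.
From HB Require Import structures.
From mathcomp Require Import all_boot all_order all_algebra.
From mathcomp Require Import reals.
From mathcomp Require Import zify.
Set Implicit Arguments. Unset Strict Implicit. Unset Printing Implicit Defensive.

Lemma card_set_sum (T : finType) (P : pred T) : #|[set x | P x]| = \sum_(x : T) (P x : nat).
Proof. by rewrite -sum1_card big_mkcond; apply: eq_bigr => x _; rewrite inE; case: (P x). Qed.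

Lemma card_tuple_rec n (P : seq letter -> bool) :
  #|[set t : n.+1.-tuple letter | P t]| = \sum_(a : letter) #|[set t : n.-tuple letter | P (a :: t)]|.
Proof.
rewrite card_set_sum.
rewrite (reindex (fun x : letter * n.-tuple letter => [tuple of x.1 :: x.2])) /=; last first.
  exists (fun t : n.+1.-tuple letter => (thead t, [tuple of behead t])) => [[a t] _|t _] /=.
    by congr pair; apply: val_inj.
  by rewrite [RHS]tuple_eta.
rewrite -(pair_big xpredT xpredT (fun a (t : n.-tuple letter) => (P (a :: t) : nat))) /=.
by apply: eq_bigr => a _; rewrite card_set_sum.
Qed.

Lemma sum_letter (F : letter -> nat) : \sum_(a : letter) F a = F A + F B + F C + F D.
Proof.
rewrite (reindex letter_decode) /=; last first.
  exists letter_code => [i _|x _]; last by rewrite letter_codeK.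
  by apply: val_inj; case: i => [[|[|[|[|?]]]] ?] //=; rewrite inordK.
by rewrite !big_ord_recl big_ord0 /= addn0 !addnA.
Qed.

Inductive nd := n0 | n1 | n2.
Inductive st := Pre | Wa of bool | Wb of bool | Wx of nd & bool | Z of nd & bool & bool.

Definition ndec (n : nd) := match n with n2 => n1 | _ => n0 end.
Definition isC (x : letter) := if x is C then true else false.

Definition step (q : st) (a : letter) : option st :=
  match q with
  | Pre => if a is A then Some (Wa false) else None
  | Wa p => match a with A => Some (Z n0 false false) | B => Some (Wb p)
            | C => Some (Wx n0 true) | D => Some (Wx n0 false) end
  | Wb p => match a with A => Some (Z (if p then n1 else n0) false false)
            | B => Some (Wx (if p then n2 else n0) false)
            | C => Some (Wx (if p then n1 else n0) true)
            | D => Some (Wx (if p then n1 else n0) false) end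
  | Wx n c => match a with A => Some (Z n false c)
              | B => if c then None else Some (Wx n false)
              | C => Some (Wx n true) | D => Some (Wx n false) end
  | Z n c p => match a with A => if n is n0 then Some (Wa p) else None
               | B => if c then None else Some (Z (ndec n) false p)
               | C => Some (Z n true p) | D => Some (Z n false p) end
  end.

Fixpoint runf (q : st) (u : seq letter) : option st :=
  match u with [::] => Some q
  | a :: u' => if step q a is Some q' then runf q' u' else None end.
Definition run q u : bool := if runf q u is Some _ then true else false.

Definition hN (q : st) : N :=
  match q with
  | Pre => 1655222%num
  | Wa false => 6135439%num
  | Wa true => 5079094%num
  | Wb false => 6135439%num
  | Wb true => 2219863%num
  | Wx n0 false => 6135439%num
  | Wx n0 true => 4188379%num
  | Wx n1 false => 2625051%num
  | Wx n1 true => 1792000%num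
  | Wx n2 false => 1123132%num
  | Wx n2 true => 766710%num
  | Z n0 false false => 6283093%num
  | Z n0 false true => 5201327%num
  | Z n0 true false => 4588039%num
  | Z n0 true true => 3798112%num
  | Z n1 false false => 2688222%num
  | Z n1 false true => 2225389%num
  | Z n1 true false => 993168%num
  | Z n1 true true => 822173%num
  | Z n2 false false => 1150158%num
  | Z n2 false true => 952134%num
  | Z n2 true false => 424928%num
  | Z n2 true true => 351769%num
  end.

Definition hoN (o : option st) : N := if o is Some q then hN q else 0%num.

Lemma checkN q : (100000 * (hoN (step q A) + hoN (step q B) + hoN (step q C) + hoN (step q D))
                   <= 370672 * hN q)%num.
Proof. by case: q => [|[]|[]|[] []|[] [] []]; vm_compute; discriminate. Qed.

Definition h q := N.to_nat (hN q).
Definition ho o := N.to_nat (hoN o).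
Definition Dd := N.to_nat 100000.
Definition Nn := N.to_nat 370672.

Lemma check q : Dd * (ho (step q A) + ho (step q B) + ho (step q C) + ho (step q D)) <= Nn * h q.
Proof.
have := @checkN q; rewrite /Dd /Nn /ho /h => H.
apply/leP; lia.
Qed.

Definition cnt n q := #|[set t : n.-tuple letter | run q t]|.
Definition cnto n (o : option st) := if o is Some q then cnt n q else 0.

Lemma cnt_rec n q : cnt n.+1 q = cnto n (step q A) + cnto n (step q B) + cnto n (step q C) + cnto n (step q D).
Proof.
rewrite /cnt card_tuple_rec sum_letter.
have E a : #|[set t : n.-tuple letter | run q (a :: t)]| = cnto n (step q a).
  rewrite /run /=; case: (step q a) => [q'|] //=.
  by apply: eq_card0 => t; rewrite inE.
by rewrite !E.
Qed.

Lemma cnt_bound_gen (Dd Nn : nat)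
  (check : forall q, Dd * (ho (step q A) + ho (step q B) + ho (step q C) + ho (step q D)) <= Nn * h q)
  n q : cnt n q * Dd ^ n <= h q * Nn ^ n.
Proof.
elim: n q => [|n IH] q.
  rewrite !expn0 !muln1 /cnt.
  apply: (leq_trans (max_card _)); rewrite card_tuple expn0 /h.
  have : (0 < hN q)%num by case: q => [|[]|[]|[] []|[] [] []]; vm_compute.
  move=> H; apply/ltP; lia.
have Ho o : cnto n o * Dd ^ n <= ho o * Nn ^ n.
  by case: o => [q'|]; [exact: IH | rewrite /cnto mul0n].
rewrite cnt_rec expnS mulnCA.
apply: (@leq_trans (Dd * (ho (step q A) + ho (step q B) + ho (step q C) + ho (step q D)) * Nn ^ n)).
  rewrite -mulnA leq_mul2l; apply/orP; right.
  by rewrite !mulnDl !leq_add.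
rewrite expnS mulnA leq_mul2r (mulnC (h q)); apply/orP; right; exact: check.
Qed.

Lemma cnt_bound n q : cnt n q * Dd ^ n <= h q * Nn ^ n.
Proof. exact: cnt_bound_gen check n q. Qed.


Definition Afree (c : word) := A \notin c.
Definition W (cs : seq word) : word := flatten (map (cons A) cs).
Arguments W : simpl never.

Fixpoint spl (u : word) : word * seq word :=
  match u with [::] => ([::], [::])
  | a :: u' => let (p, cs) := spl u' in if a == A then ([::], p :: cs) else (a :: p, cs) end.

Lemma W_cons c cs : W (c :: cs) = A :: c ++ W cs. Proof. by []. Qed.
Lemma W_cat a b : W (a ++ b) = W a ++ W b.
Proof. by rewrite /W map_cat flatten_cat. Qed.

Lemma spl_ok u : u = (spl u).1 ++ W (spl u).2.
Proof.
elim: u => [|a u IH] //=; case: (spl u) IH => p cs /= IH.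
by case: eqP => [->|_] /=; rewrite [u in LHS]IH.
Qed.

Lemma spl_free u : Afree (spl u).1 && all Afree (spl u).2.
Proof.
elim: u => [|a u IH] //=; case: (spl u) IH => p cs /= /andP [Hp Hcs].
case: eqP => [_|/eqP Ha] /=; first by rewrite Hp Hcs.
by move: Hp; rewrite /Afree in_cons negb_or eq_sym Ha Hcs => ->.
Qed.

Lemma spl_W cs : all Afree cs -> forall p, Afree p -> spl (p ++ W cs) = (p, cs).
Proof.
elim: cs => [|c cs IH] /= Hcs p Hp.
  elim: p Hp => [|x p IHp] //=; rewrite /Afree in_cons negb_or => /andP [Hx Hp].
  by rewrite (IHp Hp) eq_sym (negbTE Hx).
move/andP: Hcs => [Hc Hcs].
elim: p Hp => [|x p IHp] /=.
  by move=> _; have := IH Hcs c Hc; rewrite /W => ->; rewrite eqxx.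
rewrite /Afree in_cons negb_or => /andP [Hx Hp].
by rewrite (IHp Hp) eq_sym (negbTE Hx).
Qed.

Lemma spl_WA cs : all Afree cs -> spl (W cs) = ([::], cs).
Proof. by move=> H; rewrite -(spl_W H (p := [::])). Qed.

Fixpoint ilv (a b : seq word) : seq word :=
  match a, b with x :: a', y :: b' => x :: y :: ilv a' b' | _, _ => [::] end.
Fixpoint unilv (s : seq word) : seq word * seq word :=
  match s with x :: y :: s' => (x :: (unilv s').1, y :: (unilv s').2)
  | [:: x] => ([:: x], [::]) | [::] => ([::], [::]) end.

Lemma unilvK a b : size a = size b -> unilv (ilv a b) = (a, b).
Proof. by elim: a b => [|x a IH] [|y b] //= [/IH ->]. Qed.

Lemma all_ilv P a b : all P a -> all P b -> all P (ilv a b).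
Proof. by elim: a b => [|x a IH] [|y b] //= /andP [-> Ha] /andP [-> Hb] /=; rewrite IH. Qed.

Lemma size_W_ilv a b : size a = size b -> size (W (ilv a b)) = size (W a) + size (W b).
Proof.
elim: a b => [|x a IH] [|y b] // [Hs].
rewrite [ilv _ _]/= !W_cons /= !size_cat /= !size_cat (IH _ Hs); lia.
Qed.

Lemma size_W_rev a : size (W (rev a)) = size (W a).
Proof.
elim: a => [|x a IH] //.
rewrite rev_cons -cats1 W_cat size_cat IH W_cons /W /= cats0 !size_cat /=; lia.
Qed.

Lemma count_W cs : all Afree cs -> count (pred1 A) (W cs) = size cs.
Proof.
elim: cs => [|c cs IH] //= /andP [Hc /IH]; rewrite count_cat => ->.
by move/count_memPn: Hc => ->; rewrite eqxx.
Qed.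

Definition enc (w z : word) : word := W (ilv (spl w).2 (rev (spl z).2)).
Definition dec (u : word) : word * word :=
  let p := unilv (spl u).2 in (W p.1, W (rev p.2)).

Lemma splA u : head D u == A -> (spl u).1 = [::].
Proof. by case: u => [|a u] //= /eqP ->; case: (spl u) => ? ?; rewrite eqxx. Qed.

Lemma dec_enc w z : head D w == A -> head D z == A ->
  count (pred1 A) w = count (pred1 A) z -> dec (enc w z) = (w, z).
Proof.
move=> hw hz hc.
have ew := @spl_ok w; have ez := @spl_ok z.
rewrite (splA hw) /= in ew; rewrite (splA hz) /= in ez.
move: (@spl_free w) (@spl_free z) => /andP [_ fw] /andP [_ fz].
have es : size (spl w).2 = size (rev (spl z).2).
  by rewrite size_rev -(count_W fw) -(count_W fz) -ew -ez.
rewrite /dec /enc spl_WA ?all_ilv ?all_rev //= unilvK //= revK.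
by rewrite -ew -ez.
Qed.

Lemma size_enc w z : head D w == A -> head D z == A ->
  count (pred1 A) w = count (pred1 A) z -> size (enc w z) = size w + size z.
Proof.
move=> hw hz hc.
have ew := @spl_ok w; have ez := @spl_ok z.
rewrite (splA hw) /= in ew; rewrite (splA hz) /= in ez.
move: (@spl_free w) (@spl_free z) => /andP [_ fw] /andP [_ fz].
have es : size (spl w).2 = size (rev (spl z).2).
  by rewrite size_rev -(count_W fw) -(count_W fz) -ew -ez.
by rewrite /enc size_W_ilv // size_W_rev -ew -ez.
Qed.


Definition lbeq (x y : letter) : bool :=
  match x, y with A, A | B, B | C, C | D, D => true | _, _ => false end.
Lemma lbeqE (x y : letter) : (x == y) = lbeq x y.
Proof. by case: x; case: y => /=; first [exact: eqxx | apply/negbTE/eqP]. Qed.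

Fixpoint noCBr (s : word) : bool :=
  match s with x :: ((y :: _) as t) => ~~ ((x == C) && (y == B)) && noCBr t | _ => true end.

Lemma isCE x : isC x = (x == C). Proof. by case: x; rewrite lbeqE. Qed.

Lemma runf_cat q u1 u2 : runf q (u1 ++ u2) = if runf q u1 is Some q' then runf q' u2 else None.
Proof.
elim: u1 q => [|a u1 IH] q //=.
by case: (step q a) => [q'|] //.
Qed.

Lemma runf_cons q a u : runf q (a :: u) = if step q a is Some q' then runf q' u else None.
Proof. by []. Qed.

Lemma notA_cons x u : A \notin x :: u -> (x != A) && (A \notin u).
Proof. by rewrite in_cons negb_or eq_sym. Qed.

Lemma runf_Wx n u : forall x, A \notin u -> noCBr (x :: u) ->
  runf (Wx n (isC x)) u = Some (Wx n (isC (last x u))).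
Proof.
elim: u => [|y u IH] x // /notA_cons /andP [Hy Hu] /andP [Hxy Hn] /=.
rewrite -(IH y Hu Hn).
by move: Hy Hxy Hn; rewrite !lbeqE; case: y => //=; case: x.
Qed.

Fixpoint iterd k n := if k is k'.+1 then iterd k' (ndec n) else n.

Lemma runf_Z n p u : forall x, A \notin u -> noCBr (x :: u) ->
  runf (Z n (isC x) p) u = Some (Z (iterd (count (pred1 B) u) n) (isC (last x u)) p).
Proof.
elim: u n => [|y u IH] n x // /notA_cons /andP [Hy Hu] /andP [Hxy Hn].
move: Hy Hxy; rewrite !lbeqE.
case: y Hn => Hn //= _.
- case: x => //= _; rewrite (IH _ B Hu Hn) lbeqE /=; by [].
- by rewrite (IH _ C Hu Hn) lbeqE.
- by rewrite (IH _ D Hu Hn) lbeqE.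
Qed.

Definition needv (pc : bool) (v : word) : nd :=
  if pc && (nth D v 0 == B) then (if nth D v 1 == B then n2 else n1) else n0.

Definition cond (pc : bool) (v s : word) : bool :=
  if pc && (nth D v 0 == B) then
    (if nth D v 1 == B then 1 < count (pred1 B) s else 0 < count (pred1 B) s)
  else true.

Lemma runf_Wa pc v : A \notin v -> noCBr v ->
  exists X, runf (Wa pc) v = Some X /\ step X A = Some (Z (needv pc v) false (isC (last A v))).
Proof.
case: v => [|y u].
  by move=> _ _; exists (Wa pc); rewrite /needv /= lbeqE andbF.
move=> /notA_cons /andP [Hy Hu] Hn.
have Hn' : noCBr (y :: u) by [].
move: Hy; rewrite lbeqE; case: y Hn Hn' => // Hn Hn' _.
- case: u Hu Hn Hn' => [|y u].
    by move=> _ _ _; exists (Wb pc); rewrite /needv /= !lbeqE /= andbT.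
  move=> Hu _ /andP [_ Hn].
  move: (Hu) => /notA_cons /andP [Hy Hu'].
  have E : step (Wb pc) y = Some (Wx (needv pc [:: B, y & u]) (isC y)).
    by rewrite /needv /= !lbeqE andbT; move: Hy; rewrite lbeqE; case: y {Hu Hn} => //; case: pc.
  exists (Wx (needv pc [:: B, y & u]) (isC (last y u))); split; last by [].
  transitivity (if step (Wb pc) y is Some q' then runf q' u else None); first by [].
  by rewrite E; exact: runf_Wx.
- rewrite /= (runf_Wx (x := C) _ Hu Hn'); eexists; split; first reflexivity.
  by rewrite /needv /= lbeqE andbF.
- rewrite /= (runf_Wx (x := D) _ Hu Hn'); eexists; split; first reflexivity.
  by rewrite /needv /= lbeqE andbF.
Qed.

Lemma iterd0 k : iterd k n0 = n0. Proof. by elim: k. Qed.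

Lemma cond_need pc v s : cond pc v s -> iterd (count (pred1 B) s) (needv pc v) = n0.
Proof.
rewrite /cond /needv; case: ifP => _; last by rewrite iterd0.
case: ifP => _.
  by case: (count _ s) => [|[|k]] //= _; rewrite iterd0.
by case: (count _ s) => [|k] //= _; rewrite iterd0.
Qed.

Lemma noCBr_A s : noCBr (A :: s) = noCBr s.
Proof. by case: s => [|y s] //=; rewrite lbeqE. Qed.

Lemma run_chunk q pc v s : step q A = Some (Wa pc) -> A \notin v -> A \notin s ->
  noCBr v -> noCBr s -> cond pc v s ->
  exists q', runf q (A :: v ++ A :: s) = Some q' /\ step q' A = Some (Wa (isC (last A v))).
Proof.
move=> Hq Hv Hs Nv Ns Hc.
have [X [HX1 HX2]] := runf_Wa pc Hv Nv.
exists (Z n0 (isC (last A s)) (isC (last A v))); split; last by [].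
transitivity (runf (Wa pc) (v ++ A :: s)); first by rewrite runf_cons Hq.
rewrite runf_cat HX1 runf_cons HX2.
have := runf_Z (needv pc v) (isC (last A v)) (x := A) Hs; rewrite noCBr_A => /(_ Ns) /= ->.
by rewrite (cond_need Hc).
Qed.

Fixpoint Pch pc (vs ss : seq word) : bool :=
  match vs, ss with
  | v :: vs', s :: ss' => [&& A \notin v, A \notin s, noCBr v, noCBr s, cond pc v s &
                            Pch (isC (last A v)) vs' ss']
  | [::], [::] => true
  | _, _ => false
  end.

Lemma run_P vs : forall ss pc q, Pch pc vs ss -> step q A = Some (Wa pc) -> run q (W (ilv vs ss)).
Proof.
elim: vs => [|v vs IH] [|s ss] pc q //=.
move=> /and5P [Hv Hs Nv Ns /andP [Hc HP]] Hq.
have [q' [H1 H2]] := run_chunk Hq Hv Hs Nv Ns Hc.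
have -> : W [:: v, s & ilv vs ss] = (A :: v ++ A :: s) ++ W (ilv vs ss).
  by rewrite !W_cons /= -catA.
rewrite /run runf_cat H1.
exact: (IH ss _ q' HP H2).
Qed.

Lemma P_of_idx vs : forall ss pc, size ss = size vs -> all Afree vs -> all Afree ss ->
  all noCBr vs -> all noCBr ss ->
  (0 < size vs -> cond pc (nth [::] vs 0) (nth [::] ss 0)) ->
  (forall j, 0 < j < size vs -> cond (isC (last A (nth [::] vs j.-1))) (nth [::] vs j) (nth [::] ss j)) ->
  Pch pc vs ss.
Proof.
elim: vs => [|v vs IH] [|s ss] pc //= [Hsz] /andP [Av Avs] /andP [As Ass] /andP [Nv Nvs] /andP [Ns Nss] H0 Hj.
apply/and5P; split => //; apply/andP; split; first exact: H0.
apply: IH => //.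
  by move=> Hp; apply: (Hj 1).
move=> [|j] // /andP [_ Hjs].
exact: (Hj j.+2).
Qed.

Lemma posA_cat u v : posA (u ++ v) = posA u ++ map (addn (size u)) (posA v).
Proof.
rewrite /posA size_cat iotaD filter_cat add0n; congr (_ ++ _).
  apply: eq_in_filter => p; rewrite mem_iota add0n => /andP [_ Hp].
  by rewrite nth_cat Hp.
rewrite -{1}(addn0 (size u)) iotaDl filter_map; congr map.
apply: eq_filter => p /=; rewrite nth_cat ltnNge leq_addr /=.
by rewrite addKn.
Qed.

Lemma posA_free v : A \notin v -> posA v = [::].
Proof.
move=> Hv; rewrite /posA -(filter_pred0 (iota 0 (size v))).
apply: eq_in_filter => p; rewrite mem_iota add0n => /andP [_ Hp] /=.
apply/negbTE/eqP => E; move: Hv; rewrite -E mem_nth //.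
Qed.

Lemma posA_W_cons c cs : A \notin c ->
  posA (W (c :: cs)) = 0 :: map (addn (size c).+1) (posA (W cs)).
Proof.
move=> Hc; have pA : posA [:: A] = [:: 0] by rewrite /posA /= lbeqE.
rewrite W_cons -cat1s posA_cat posA_cat (posA_free Hc) pA /= -map_comp.
by congr (_ :: _); apply: eq_map => x /=; rewrite add1n addSn.
Qed.

Lemma size_posA_W cs : all Afree cs -> size (posA (W cs)) = size cs.
Proof.
elim: cs => [|c cs IH] /=; first by rewrite /W /posA.
by move=> /andP [Hc Hcs]; rewrite posA_W_cons //= size_map IH.
Qed.

Lemma nth_posA_W cs : all Afree cs -> forall j, j < size cs -> nth 0 (posA (W cs)) j = size (W (take j cs)).
Proof.
elim: cs => [|c cs IH] // /andP [Hc Hcs] [|j] Hj.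
  by rewrite posA_W_cons.
rewrite posA_W_cons //= (nth_map 0) ?size_posA_W // IH //.
rewrite size_cat -/(W (take j cs)); lia.
Qed.

Lemma W_decomp cs j : j < size cs ->
  W cs = W (take j cs) ++ A :: nth [::] cs j ++ W (drop j.+1 cs).
Proof.
move=> Hj; rewrite -{1}(cat_take_drop j cs) (drop_nth [::] Hj) W_cat W_cons //.
Qed.

Lemma W_rcons l u : W (rcons l u) = W l ++ A :: u.
Proof. by rewrite -cats1 W_cat W_cons /W /= cats0. Qed.

Lemma noCBr_catA c t : noCBr (c ++ A :: t) = noCBr c && noCBr (A :: t).
Proof.
elim: c => [|x c IH] //.
case: c IH => [|y c] IH.
  by rewrite /= !lbeqE /= andbF.
have E s : noCBr [:: x, y & s] = ~~ ((x == C) && (y == B)) && noCBr (y :: s) by [].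
by rewrite [_ ++ _]/= E -cat_cons IH E andbA.
Qed.

Lemma noCBr_cat_W c cs : noCBr (c ++ W cs) = noCBr c && noCBr (W cs).
Proof.
case: cs => [|c' cs]; first by rewrite /W /= cats0 andbT.
by rewrite W_cons noCBr_catA.
Qed.

Lemma noCBr_W cs : noCBr (W cs) -> all noCBr cs.
Proof.
elim: cs => [|c cs IH] //; rewrite W_cons noCBr_A noCBr_cat_W => /andP [Hc /IH Hcs].
by rewrite /= Hc Hcs.
Qed.

Lemma noCBr_ex w : ~~ noCBr w -> exists p, p < size w /\ (nth D w p == C) && (nth D w p.+1 == B).
Proof.
elim: w => [|x w IH] //.
case: w IH => [|y w] IH //=.
rewrite negb_and negbK => /orP [H|/IH [p [Hp Hq]]].
  by exists 0.
by exists p.+1.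
Qed.

Lemma no_CB_noCBr w : no_CB w -> noCBr w.
Proof.
apply: contraLR => /noCBr_ex [p [Hp Hq]]; rewrite /no_CB negbK.
by apply/existsP; exists (Ordinal Hp).
Qed.

Lemma headB v cs : (nth D (v ++ W cs) 0 == B) = (nth D v 0 == B).
Proof.
case: v => [|x v]; last by [].
case: cs => [|c cs]; first by [].
by rewrite cat0s W_cons /= !lbeqE.
Qed.

Lemma headBB v cs : (nth D (v ++ W cs) 0 == B) && (nth D (v ++ W cs) 1 == B)
                    = (nth D v 0 == B) && (nth D v 1 == B).
Proof.
case: v => [|x v]; first by rewrite headB /= !lbeqE.
have E l : nth D (x :: l) 1 = nth D l 0 by [].
by rewrite cat_cons !E headB.
Qed.

Lemma posA_right_W vs i : all Afree vs -> i < size vs ->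
  posA_right (W vs) i = size (W (take (size vs - i.+1) vs)).
Proof.
move=> Hf Hi; rewrite /posA_right nth_rev size_posA_W // nth_posA_W //; lia.
Qed.

Lemma segment_W ss i : all Afree ss -> i < size ss -> segment (W ss) i = A :: nth [::] ss i.
Proof.
move=> Hf Hi; rewrite /segment nth_posA_W //.
have E : nth (size (W ss)) (posA (W ss)) i.+1 = size (W (take i.+1 ss)).
  case: (ltnP i.+1 (size ss)) => H.
    by rewrite (set_nth_default 0) ?size_posA_W // nth_posA_W.
  by rewrite nth_default ?size_posA_W // take_oversize.
rewrite E (take_nth [::] Hi) W_rcons (W_decomp Hi).
set X := W (take i ss); set s := nth [::] ss i; set Y := W (drop i.+1 ss).
have -> : X ++ A :: s ++ Y = (X ++ A :: s) ++ Y by rewrite -catA.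
by rewrite take_size_cat // drop_size_cat.
Qed.

Lemma countBA s : count (pred1 B) (A :: s) = count (pred1 B) s.
Proof. by rewrite /= lbeqE. Qed.

Lemma good_run w z : good_pair w z -> run Pre (enc w z).
Proof.
case/and5P => hw hz hc nw /andP [nz /andP [f1 f2]].
have ew : w = W (spl w).2 by rewrite {1}(@spl_ok w) (splA hw).
have ez : z = W (spl z).2 by rewrite {1}(@spl_ok z) (splA hz).
have [_ fw] := andP (@spl_free w).
have [_ fz] := andP (@spl_free z).
rewrite /enc.
move: f1 f2 nw nz hc fw fz ew ez.
move: (spl w).2 (spl z).2 => vs ss f1 f2 nw nz hc fw fz ew ez.
have hk : size ss = size vs.
  by rewrite -(count_W fw) -(count_W fz) -ew -ez; apply/esym/eqP.
apply: (@run_P vs (rev ss) false Pre); last by [].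
apply: P_of_idx.
- by rewrite size_rev.
- exact: fw.
- by rewrite all_rev.
- by apply: noCBr_W; rewrite -ew; exact: no_CB_noCBr.
- by rewrite all_rev; apply: noCBr_W; rewrite -ez; exact: no_CB_noCBr.
- by rewrite /cond.
move=> j /andP [j0 jk].
have Hi : size vs - j.+1 < size vs by lia.
have Hic : size vs - j.+1 < count (pred1 A) w by rewrite ew count_W.
have g1 := forallP f1 (Ordinal Hic); have g2 := forallP f2 (Ordinal Hic).
simpl in g1, g2.
rewrite ez segment_W ?hk // countBA in g1 g2.
rewrite ew posA_right_W // in g1 g2.
have Hj' : size vs - (size vs - j.+1).+1 = j by lia.
rewrite Hj' (W_decomp jk) in g1 g2.
rewrite nth_rev ?hk //.
move: g1 g2.
have HX : W (take j vs) = W (take j.-1 vs) ++ A :: nth [::] vs j.-1.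
  by rewrite -{1}(ltn_predK j0) (take_nth [::]) ?W_rcons //; apply: leq_ltn_trans (leq_pred j) jk.
move: (W (take j vs)) HX => X HX.
move: (nth [::] vs j) => v.
have Hpc : precC (X ++ A :: v ++ W (drop j.+1 vs)) (size X) = isC (last A (nth [::] vs j.-1)).
  have Hs : 0 < size X by rewrite HX size_cat /= addnS.
  rewrite /precC Hs /= nth_cat ifT; last by lia.
  by rewrite nth_last HX last_cat /= isCE.
have Hn1 : nth D (X ++ A :: v ++ W (drop j.+1 vs)) (size X).+1 = nth D (v ++ W (drop j.+1 vs)) 0.
  by rewrite nth_cat ifF; [have -> : (size X).+1 - size X = 1 by lia | lia].
have Hn2 : nth D (X ++ A :: v ++ W (drop j.+1 vs)) (size X).+2 = nth D (v ++ W (drop j.+1 vs)) 1.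
  by rewrite nth_cat ifF; [have -> : (size X).+2 - size X = 2 by lia | lia].
rewrite Hpc Hn1 Hn2 -andbA headBB headB.
rewrite /cond; case: (isC _); case: (nth D v 0 == B); case: (nth D v 1 == B) => //=.
Qed.

Lemma sum_eq_le1 N (x : nat) : \sum_(m < N) ((x == m) : nat) <= 1.
Proof.
case: (ltnP x N) => Hx.
  rewrite (bigD1 (Ordinal Hx)) //= big1 ?addn0 ?leq_b1 // => i /eqP Hi.
  by case: eqP => // E; case: Hi; apply: val_inj.
by rewrite big1 // => i _; case: eqP => // E; move: (ltn_ord i); rewrite -E ltnNge Hx.
Qed.

Lemma k_le_cnt n : k n <= cnt n Pre.
Proof.
pose g (u : n.-tuple letter) := size (dec u).1.
apply: (@leq_trans (\sum_(m < n.+1) #|[set u : n.-tuple letter | run Pre u && (g u == m)]|)).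
  apply: leq_sum => m _.
  set S := [set p | _].
  pose f (p : m.-tuple letter * (n - m).-tuple letter) : n.-tuple letter :=
    insubd (nseq_tuple n A) (enc p.1 p.2).
  have Hm : m <= n by rewrite -ltnS.
  have Hf p : p \in S -> val (f p) = enc p.1 p.2 /\ good_pair p.1 p.2.
    rewrite inE => Hg; split => //.
    rewrite val_insubd; case/and5P: Hg => hw hz /eqP hc _ _.
    by rewrite size_enc // !size_tuple subnKC // eqxx.
  rewrite -(card_in_imset (f := f)); last first.
    move=> p1 p2 /Hf [E1 G1] /Hf [E2 G2] E.
    have := congr1 (fun t => dec (val t)) E; rewrite /= E1 E2.
    case/and5P: G1 => h1 h1' /eqP c1 _ _; case/and5P: G2 => h2 h2' /eqP c2 _ _.
    rewrite !dec_enc // => [[/val_inj e1 /val_inj e2]].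
    by move: e1 e2; case: p1 {E1 E h1 h1' c1} => a b; case: p2 {E2 h2 h2' c2} => a' b' /= -> ->.
  apply: subset_leq_card; apply/subsetP => u /imsetP [p Hp ->].
  have [E G] := Hf p Hp.
  have G' := G; case/and5P: G' => hw hz /eqP hc _ _.
  by rewrite inE /g E good_run // dec_enc // size_tuple eqxx.
have -> : \sum_(m < n.+1) #|[set u : n.-tuple letter | run Pre u && (g u == m)]| =
   \sum_(m < n.+1) \sum_(u : n.-tuple letter) ((run Pre u && (g u == m)) : nat).
  by apply: eq_bigr => m _; rewrite card_set_sum.
rewrite /cnt (card_set_sum (fun t : n.-tuple letter => run Pre t)).
rewrite exchange_big /=; apply: leq_sum => u _.
case: (run Pre u) => /=; last by rewrite big1.
exact: sum_eq_le1.
Qed.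

Lemma DdE : Dd = 100000. Proof. by apply/eqP; vm_compute. Qed.
Lemma NnE : Nn = 370672. Proof. by apply/eqP; vm_compute. Qed.

Unset Implicit Arguments.
Import Order.TTheory GRing.Theory Num.Theory.
Local Open Scope ring_scope.

Theorem corollary4p3 (R : realType) :
  exists c : R, forall n : nat, (2 <= n)%N ->
    (k n)%:R <= c * (370672%:R / 100000%:R) ^+ n.
Proof.
exists (h Pre)%:R => n _.
have H : (k n * 100000 ^ n <= h Pre * 370672 ^ n)%N.
  rewrite -DdE -NnE; apply: leq_trans (cnt_bound n Pre).
  by rewrite leq_mul2r k_le_cnt orbT.
have Hp : 0 < (100000%:R : R) ^+ n by apply: exprn_gt0; rewrite ltr0n.
rewrite expr_div_n mulrA (ler_pdivlMr _ _ Hp).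
rewrite -[X in _ * X <= _]natrX -[X in _ <= _ * X]natrX -[X in X <= _]natrM -[X in _ <= X]natrM ler_nat.
exact: H.
Qed.
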